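(* Let $G=(V,E)$ be a graph with $V=\{1,\dots,n\}$ and let $k\ge 2$ be an integer with $\binom{k}{2}\le|E|$. For each edge $e=\{i,j\}$ let $\psi^e\in\mathbb{R}^n$ be the vector with $\psi^e_i=\psi^e_j=1$ and all other coordinates $0$. Let \[ S=\Big\{x\in\mathbb{R}^n:\ |\{e\in E: x\ge\psi^e \text{ coordinatewise}\}|\ge\tbinom{k}{2}\Big\}. \] Then (i) $S$ is star-shaped, with $(1,\dots,1)\in K_S$; and (ii) $G$ has a clique with $k$ vertices if and only if there exists $x\in S$ with $\sum_{i=1}^n x_i\le k$.
   Context: The kernel of a set $S\subseteq\mathbb{R}^n$ is $K_S=\{x\in S:[x,y]\subseteq S\ \forall y\in S\}$, where $[x,y]$ is the closed segment; $S$ is star-shaped if $K_S\ne\emptyset$. *)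

(* Defs.v *)
(* Vectors of R^n are row vectors 'rV[R]_n over an arbitrary
   real field R; vertices {1..n} are 'I_n. *)
From HB Require Import structures.
From mathcomp Require Import all_boot all_order all_algebra.
Set Implicit Arguments. Unset Strict Implicit. Unset Printing Implicit Defensive.
Import Order.TTheory GRing.Theory Num.Theory.
Local Open Scope ring_scope.

Section Defs.
Variable R : realFieldType.

Definition segment_in (n : nat) (S : 'rV[R]_n -> Prop) (x y : 'rV[R]_n) : Prop :=
  forall t : R, 0 <= t -> t <= 1 -> S ((1 - t) *: x + t *: y).

Definition in_kernel (n : nat) (S : 'rV[R]_n -> Prop) (x : 'rV[R]_n) : Prop :=
  S x /\ forall y, S y -> segment_in S x y.

Definition star_shaped (n : nat) (S : 'rV[R]_n -> Prop) : Prop :=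
  exists x, in_kernel S x.

(* Edge set of a simple graph given by a symmetric irreflexive relation:
   each edge {i,j} represented once as the pair (i,j) with i < j. *)
Definition edges (n : nat) (e : rel 'I_n) : {set 'I_n * 'I_n} :=
  [set p : 'I_n * 'I_n | ((p.1 < p.2)%N && e p.1 p.2)].

Definition psi (n : nat) (p : 'I_n * 'I_n) : 'rV[R]_n :=
  \row_i (if (i == p.1) || (i == p.2) then 1 else 0).

Definition dominates (n : nat) (x : 'rV[R]_n) (p : 'I_n * 'I_n) : bool :=
  [forall i, psi p 0 i <= x 0 i].

Definition Sset (n : nat) (e : rel 'I_n) (k : nat) (x : 'rV[R]_n) : Prop :=
  ('C(k, 2) <= #|[set p in edges e | dominates x p]|)%N.

End Defs.

Definition has_clique (n : nat) (e : rel 'I_n) (k : nat) : Prop :=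
  exists Q : {set 'I_n}, #|Q| = k /\
    forall i j, i \in Q -> j \in Q -> i != j -> e i j.

(* Main.v *)
Require Import Defs.
From HB Require Import structures.
From mathcomp Require Import all_boot all_order all_algebra.
Import Order.TTheory GRing.Theory Num.Theory.
Set Implicit Arguments. Unset Strict Implicit. Unset Printing Implicit Defensive.

Definition pairsQ n (Q : {set 'I_n}) : {set 'I_n * 'I_n} :=
  [set p : 'I_n * 'I_n | [&& (p.1 < p.2)%N, p.1 \in Q & p.2 \in Q]].

Lemma card_pairs n (Q : {set 'I_n}) : #|pairsQ Q| = 'C(#|Q|, 2).
Proof.
rewrite -cards_draws.
have -> : [set A : {set 'I_n} | A \subset Q & #|A| == 2] =
   [set [set p.1; p.2] | p in pairsQ Q].
  apply/setP => A; rewrite inE; apply/idP/imsetP.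
    case/andP=> sAQ /cards2P [x [y [nxy defA]]].
    have xQ : x \in Q by apply: (subsetP sAQ); rewrite defA !inE eqxx.
    have yQ : y \in Q by apply: (subsetP sAQ); rewrite defA !inE eqxx orbT.
    case: (ltngtP x y) => [lxy|lyx|exy].
    - by exists (x, y) => //; rewrite inE /= lxy xQ yQ.
    - by exists (y, x); [rewrite inE /= lyx xQ yQ | rewrite /= setUC].
    - by move: nxy; rewrite (val_inj exy) eqxx.
  case=> [[a b]]; rewrite inE /= => /and3P [lab aQ bQ] ->.
  have nab : a != b by rewrite neq_ltn lab.
  rewrite cards2 nab andbT; apply/subsetP => z; rewrite !inE.
  by case/orP => /eqP ->.
rewrite card_in_imset //.
move=> [a b] [c d]; rewrite !inE /= => /and3P [lab _ _] /and3P [lcd _ _] E.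
have ha : a \in [set c; d] by rewrite -E !inE eqxx.
have hb : b \in [set c; d] by rewrite -E !inE eqxx orbT.
rewrite !inE in ha hb.
case/orP: ha => /eqP ea; case/orP: hb => /eqP eb; subst.
- by rewrite ltnn in lab.
- by [].
- by move: (ltn_trans lab lcd); rewrite ltnn.
- by rewrite ltnn in lab.
Qed.

Local Open Scope ring_scope.

Lemma psi01 (R : realFieldType) n (p : 'I_n * 'I_n) i :
  @psi R n p 0 i = 0 \/ @psi R n p 0 i = 1.
Proof. by rewrite mxE; case: ifP; auto. Qed.

Lemma psi_ge0 (R : realFieldType) n (p : 'I_n * 'I_n) i : 0 <= @psi R n p 0 i.
Proof. by case: (psi01 R p i) => ->. Qed.

Lemma psi_le1 (R : realFieldType) n (p : 'I_n * 'I_n) i : @psi R n p 0 i <= 1.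
Proof. by case: (psi01 R p i) => ->. Qed.

Theorem mainTheorem17 (R : realFieldType) (n : nat) (e : rel 'I_n)
  (e_sym : symmetric e) (e_irr : irreflexive e) (k : nat)
  (hk : (2 <= k)%N) (hE : ('C(k, 2) <= #|edges e|)%N) :
  (star_shaped (Sset (R := R) e k) /\ in_kernel (Sset e k) (const_mx 1 : 'rV[R]_n))
  /\ (has_clique e k <->
      exists x : 'rV[R]_n, Sset e k x /\ \sum_(i < n) x 0 i <= k%:R).
Proof.
have Hker : in_kernel (Sset (R := R) e k) (const_mx 1 : 'rV[R]_n).
  split.
    rewrite /Sset; apply: (leq_trans hE); apply: subset_leq_card.
    apply/subsetP => p pE; rewrite inE pE /=; apply/forallP => i.
    by rewrite [in X in _ <= X]mxE psi_le1.
  move=> y Sy t t0 t1; rewrite /Sset; apply: (leq_trans Sy).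
  apply: subset_leq_card; apply/subsetP => p; rewrite !inE.
  case/andP=> -> /forallP dy /=; apply/forallP => i.
  have := dy i; case: (psi01 R p i) => ->; rewrite !mxE => hy.
    by apply: addr_ge0; [rewrite mulr1 subr_ge0 | apply: mulr_ge0].
  by rewrite mulr1 -{1}(subrK t 1) lerD2l ler_peMr.
split; first by split => //; exists (const_mx 1).
split.
  case=> Q [cQ hQ].
  exists (\row_i (if i \in Q then 1 else 0)); split.
    rewrite /Sset -cQ -card_pairs; apply: subset_leq_card.
    apply/subsetP => p; rewrite !inE => /and3P [lp p1 p2].
    apply/andP; split.
      rewrite lp /=; apply: hQ => //; by rewrite neq_ltn lp.
    apply/forallP => i; rewrite !mxE.
    case: ifP => [/orP [] /eqP -> | _]; first by rewrite p1.
      by rewrite p2.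
    by case: ifP.
  rewrite (eq_bigr (fun i => if i \in Q then (1:R) else 0)); last by move=> i _; rewrite mxE.
  by rewrite -big_mkcond sumr_const cQ.
case=> x [Sx sx].
set D := [set p in edges e | dominates x p] in Sx.
have : (0 < #|D|)%N by apply: leq_trans Sx; rewrite bin_gt0.
rewrite card_gt0 => /set0Pn [p0 p0D].
have xnn : forall i, 0 <= x 0 i.
  move=> i; move: p0D; rewrite inE => /andP [_ /forallP /(_ i)].
  by apply: le_trans; apply: psi_ge0.
set Q := [set i | 1 <= x 0 i].
have DQ : D \subset pairsQ Q.
  apply/subsetP => p; rewrite !inE => /andP [/andP [lp _] /forallP dp].
  rewrite lp /=; apply/andP; split.
    by have := dp p.1; rewrite mxE eqxx.
  by have := dp p.2; rewrite mxE eqxx orbT.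
have cQk : (#|Q| <= k)%N.
  rewrite -(ler_nat R); apply: le_trans sx.
  rewrite (bigID (fun i => i \in Q)) /= -[X in X <= _]addr0.
  apply: lerD; last by apply: sumr_ge0 => i _.
  rewrite -sumr_const; apply: ler_sum => i; by rewrite inE.
have cDQ := subset_leq_card DQ; rewrite card_pairs in cDQ.
have kQ : (k <= #|Q|)%N.
  rewrite leqNgt; apply/negP => lQk.
  have km : k = k.-1.+1 by rewrite prednK // (leq_trans _ hk).
  have hm : (1 <= k.-1)%N by rewrite -ltnS -km.
  move: lQk Sx; rewrite km; move: hm; set m := k.-1 => hm lQk Sx.
  have : ('C(m.+1, 2) <= 'C(m, 2))%N.
    apply: leq_trans Sx (leq_trans cDQ _); apply: leq_bin2l; by rewrite -ltnS.
  by rewrite binS bin1 -{2}(addn0 'C(m, 2)) leq_add2l leqn0; apply/negP; rewrite -lt0n.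
have cQ : #|Q| = k by apply/eqP; rewrite eqn_leq cQk kQ.
have DQe : D = pairsQ Q.
  apply/eqP; rewrite eqEcard DQ card_pairs cQ Sx.
  by [].
exists Q; split => // i j iQ jQ nij.
have Hp : forall a b, a \in Q -> b \in Q -> (a < b)%N -> e a b.
  move=> a b aQ bQ lab.
  have : (a, b) \in D by rewrite DQe inE /= lab aQ bQ.
  by rewrite !inE /= => /andP [/andP [_ ->]].
case: (ltngtP i j) => [lij|lji|eij].
- exact: Hp.
- by rewrite e_sym; exact: Hp.
- by move: nij; rewrite (val_inj eij) eqxx.
Qed.
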